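(* Disjoint Factors can be solved (statically) in $\mathcal{O}(k2^k+kn)$ time.
   Context: Disjoint Factors: given an integer $k$ and a word $w\in\{1,\ldots,k\}^\star$ of length $n$, decide whether there exist pairwise disjoint (contiguous) subwords $w_1,\ldots,w_k$ of $w$ such that each $w_i$ has length at least $2$ and begins and ends with the symbol $i$. Word-RAM model. *)

(* Defs.v *)
From Stdlib Require Import PeanoNat.
From mathcomp Require Import all_boot.
Set Implicit Arguments. Unset Strict Implicit. Unset Printing Implicit Defensive.

(* A word w of length n = size w over the alphabet {1,...,k} is a      *)
(* seq nat whose letters a satisfy 1 <= a <= k.  A factor (contiguous  *)
(* subword) is given by its start/end positions s <= e < n; it has     *)
(* length >= 2 iff s < e, and it begins and ends with i iff            *)
(* w_s = w_e = i.  The factors w_1..w_k are pairwise disjoint iff their *)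
(* position intervals [s_i, e_i] are pairwise disjoint.                *)

Definition is_word (k : nat) (w : seq nat) : bool :=
  all (fun a => (0 < a) && (a <= k)) w.

Definition DisjointFactors (k : nat) (w : seq nat) : Prop :=
  exists (s e : nat -> nat),
    (forall i, 1 <= i <= k ->
        [/\ s i < e i, e i < size w, nth 0 w (s i) = i & nth 0 w (e i) = i]) /\
    (forall i j, 1 <= i <= k -> 1 <= j <= k -> i != j ->
        (e i < s j) || (e j < s i)).

(* Word-RAM with word size ws: every memory cell holds a word, i.e. a  *)
(* natural number < 2^ws; arithmetic is modulo 2^ws; unit-cost ops.    *)
(* Memory is addressed by words (indirect addressing) or by constant   *)
(* addresses written in the (fixed, input-independent) program.        *)

Inductive binop :=
| OAdd | OSub | OMul | ODiv | OMod | OAnd | OOr | OXor | OShl | OShr | OLt | OEq.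

Inductive instr :=
| IConst of nat & nat          (* IConst d c     : M[d] := c mod 2^ws       *)
| IBin of binop & nat & nat & nat (* IBin op d a b : M[d] := M[a] op M[b]   *)
| ILoad of nat & nat           (* ILoad d a      : M[d] := M[M[a]]          *)
| IStore of nat & nat          (* IStore a s     : M[M[a]] := M[s]          *)
| IJz of nat & nat             (* IJz a l        : if M[a] = 0 goto l       *)
| IJmp of nat                  (* IJmp l         : goto l                   *)
| IHalt.

Definition eval_binop (ws : nat) (op : binop) (x y : nat) : nat :=
  let W := 2 ^ ws in
  match op with
  | OAdd => (x + y) %% W
  | OSub => (x + W - y %% W) %% W
  | OMul => (x * y) %% W
  | ODiv => if y == 0 then 0 else x %/ y
  | OMod => if y == 0 then 0 else x %% y
  | OAnd => Nat.land x y
  | OOr  => Nat.lor x y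
  | OXor => Nat.lxor x y
  | OShl => (x * 2 ^ y) %% W
  | OShr => x %/ 2 ^ y
  | OLt  => (x < y : nat)
  | OEq  => (x == y : nat)
  end.

Definition upd (M : nat -> nat) (a v : nat) : nat -> nat :=
  fun i => if i == a then v else M i.

(* [run ws P fuel pc M] executes program P from pc with memory M for at *)
(* most [fuel] unit-cost steps (the final Halt counting as one step).   *)
(* It returns Some M' if P halts within that budget (falling off the    *)
(* end of the program also counts as halting), None otherwise.          *)
Fixpoint run (ws : nat) (P : seq instr) (fuel pc : nat) (M : nat -> nat)
  : option (nat -> nat) :=
  match fuel with
  | 0 => None
  | f.+1 =>
    let W := 2 ^ ws in
    match nth IHalt P pc with
    | IHalt => Some M
    | IConst d c => run ws P f pc.+1 (upd M d (c %% W))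
    | IBin op d a b => run ws P f pc.+1 (upd M d (eval_binop ws op (M a) (M b) %% W))
    | ILoad d a => run ws P f pc.+1 (upd M d (M (M a)))
    | IStore a s => run ws P f pc.+1 (upd M (M a) (M s))
    | IJz a l => run ws P f (if M a == 0 then l else pc.+1) M
    | IJmp l => run ws P f l M
    end
  end.

Definition init_mem (k : nat) (w : seq nat) : nat -> nat :=
  fun i => if i == 0 then k
           else if i == 1 then size w
           else if (2 <= i) && (i < size w + 2) then nth 0 w (i - 2)
           else 0.

(* Main.v *)
Require Import Defs.
From mathcomp Require Import all_boot.
From mathcomp Require Import zify.
Set Implicit Arguments. Unset Strict Implicit. Unset Printing Implicit Defensive.

Section Math.
Variables (k : nat) (w : seq nat).

Definition Nf p c := minn (size w) (p + find (pred1 c) (drop p w)).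
Definition Ef p c := (Nf (Nf p c).+1 c).+1.
Definition bit S i := odd (S %/ 2 ^ i).

Lemma Nf_le p c : Nf p c <= size w.
Proof. exact: geq_minl. Qed.

Lemma Nf_lt p c : Nf p c < size w -> p <= Nf p c /\ nth 0 w (Nf p c) = c.
Proof.
rewrite /Nf => H.
have Hx : p + find (pred1 c) (drop p w) < size w.
  by move: H; rewrite gtn_min ltnn.
have -> : minn (size w) (p + find (pred1 c) (drop p w)) = p + find (pred1 c) (drop p w).
  by apply/minn_idPr; apply: ltnW.
split; first exact: leq_addr.
have Hf : find (pred1 c) (drop p w) < size (drop p w) by rewrite size_drop; lia.
move: (Hf); rewrite -has_find => Hh.
have := nth_find 0 Hh. by rewrite nth_drop => /eqP.
Qed.

Lemma Nf_min p c x : p <= x -> x < size w -> nth 0 w x = c -> Nf p c <= x.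
Proof.
move=> Hpx Hx Hc; rewrite /Nf.
apply: leq_trans (geq_minr _ _) _.
case: (leqP (find (pred1 c) (drop p w)) (x - p)) => H; first lia.
have := before_find 0 H. rewrite nth_drop subnKC //= Hc eqxx //.
Qed.

Lemma Nf_step p c : p < size w -> Nf p c = if nth 0 w p == c then p else Nf p.+1 c.
Proof.
move=> Hp; rewrite /Nf (drop_nth 0 Hp) /=.
case: eqP => _; first by rewrite addn0; apply/minn_idPr; apply: ltnW.
by rewrite addnS addSn.
Qed.

Lemma Nf_end p c : size w <= p -> Nf p c = size w.
Proof. move=> Hp; rewrite /Nf drop_oversize //=; apply/minn_idPl; lia. Qed.

Lemma Ef_sound p c : Ef p c <= size w -> exists s e,
  [/\ p <= s, s < e, e.+1 = Ef p c, nth 0 w s = c & nth 0 w e = c].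
Proof.
rewrite /Ef => H.
have [H1 H2] := Nf_lt H.
have Hs : Nf p c < size w by lia.
have [H3 H4] := Nf_lt Hs.
exists (Nf p c), (Nf (Nf p c).+1 c); split => //.
Qed.

Lemma Ef_complete p c s e : p <= s -> s < e -> e < size w ->
  nth 0 w s = c -> nth 0 w e = c -> Ef p c <= e.+1.
Proof.
move=> H1 H2 H3 H4 H5; rewrite /Ef ltnS.
have := Nf_min H1 (ltn_trans H2 H3) H4 => H6.
apply: Nf_min => //; lia.
Qed.

Lemma bit_le S i : bit S i -> 2 ^ i <= S.
Proof.
rewrite /bit => H. rewrite -divn_gt0 ?expn_gt0 //.
by case: (S %/ 2 ^ i) H.
Qed.

Lemma bit0n i : bit 0 i = false.
Proof. by rewrite /bit div0n. Qed.

Lemma bit_sub S i j : bit S i -> bit (S - 2 ^ i) j = bit S j && (j != i).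
Proof.
rewrite /bit => H.
case: (ltngtP j i) => Hji.
- have -> : 2 ^ i = 2 ^ (i - j) * 2 ^ j by rewrite -expnD (subnK (ltnW Hji)).
  rewrite divnBMl andbT oddB.
    by rewrite oddX /= subn_eq0 leqNgt Hji /= addbF.
  rewrite leq_divRL ?expn_gt0 // -expnD (subnK (ltnW Hji)). exact: bit_le.
-
  have Hm : 2 ^ i <= S %% 2 ^ j.
    have : odd (S %% 2 ^ j %/ 2 ^ i).
      have -> : 2 ^ j = 2 ^ (j - i) * 2 ^ i by rewrite -expnD (subnK (ltnW Hji)).
      rewrite -modn_divl odd_mod // oddX /= subn_eq0 leqNgt Hji //.
    move=> Ho; rewrite -divn_gt0 ?expn_gt0 //. by case: (_ %/ _) Ho.
  have -> : S - 2 ^ i = S %/ 2 ^ j * 2 ^ j + (S %% 2 ^ j - 2 ^ i).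
    rewrite addnBA // -divn_eq //.
  have Hlt : S %% 2 ^ j - 2 ^ i < 2 ^ j.
    by apply: leq_ltn_trans (leq_subr _ _) _; rewrite ltn_mod expn_gt0.
  rewrite divnMDl ?expn_gt0 // (divn_small Hlt) addn0.
  by rewrite andbT.
- subst j. rewrite andbF.
  have E : S - 2 ^ i = S - 1 * 2 ^ i by rewrite mul1n.
  rewrite E divnBMl oddB ?H //.
  by rewrite divn_gt0 ?expn_gt0 //; exact: bit_le.
Qed.

Lemma bit_full i : i < k -> bit (2 ^ k).-1 i.
Proof.
move=> Hi; rewrite /bit.
have -> : (2 ^ k).-1 = (2 ^ (k - i)).-1 * 2 ^ i + (2 ^ i).-1.
  have E : 2 ^ k = 2 ^ (k - i) * 2 ^ i by rewrite -expnD (subnK (ltnW Hi)).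
  have P1 : 0 < 2 ^ (k - i) by rewrite expn_gt0.
  have P2 : 0 < 2 ^ i by rewrite expn_gt0.
  rewrite E. move: P1 P2. set a := 2 ^ (k - i). set b := 2 ^ i. move=> P1 P2.
  clearbody a b. case: a P1 => [|a] // _; case: b P2 => [|b] // _.
  by rewrite mulSn addSn /= addnC.
rewrite divnMDl ?expn_gt0 // divn_small ?addn0; last first.
  by rewrite prednK ?expn_gt0.
have P1 : 0 < 2 ^ (k - i) by rewrite expn_gt0.
rewrite -subn1 oddB // oddX /= subn_eq0 leqNgt Hi //.
Qed.

Lemma bit_ex S : 0 < S -> S < 2 ^ k -> exists2 i, i < k & bit S i.
Proof.
move=> H0; elim: k => [|k' IH]; first by rewrite expn0; lia.
move=> Hs.
case: (ltnP S (2 ^ k')) => H.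
  by case: (IH H) => i Hi Hb; exists i => //; lia.
exists k' => //.
rewrite /bit.
have : S %/ 2 ^ k' = 1.
  apply/eqP; rewrite eqn_leq; apply/andP; split.
    rewrite -ltnS ltn_divLR ?expn_gt0 //. by rewrite expnS in Hs; lia.
  by rewrite divn_gt0 ?expn_gt0.
by move=> ->.
Qed.

Definition Fstep (G : nat -> nat) S best i :=
  if bit S i then
    (if Ef (G (S - 2 ^ i)) i.+1 < best then Ef (G (S - 2 ^ i)) i.+1 else best)
  else best.

Fixpoint Ff m S := match m with
  | 0 => 0
  | m'.+1 => if S == 0 then 0 else foldl (Fstep (Ff m') S) (size w).+1 (iota 0 k)
  end.

Definition F S := Ff S.+1 S.

Lemma foldl_ext (f g : nat -> nat -> nat) b l :
  (forall b i, i \in l -> f b i = g b i) -> foldl f b l = foldl g b l.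
Proof.
elim: l b => [|x l IH] b H //=.
rewrite H ?mem_head // IH // => b' i Hi; apply: H; by rewrite in_cons Hi orbT.
Qed.

Lemma bit_lt S i : bit S i -> S - 2 ^ i < S.
Proof.
move=> H; have := bit_le H; have : 0 < 2 ^ i by rewrite expn_gt0. lia.
Qed.

Lemma Ff_succ m S : S < m -> Ff m S = Ff m.+1 S.
Proof.
elim: m S => [|m IH] S H //=.
case: eqP => // HS.
apply: foldl_ext => b i _; rewrite /Fstep.
case Hb: (bit S i) => //.
rewrite IH //. have := bit_lt Hb. lia.
Qed.

Lemma Ff_stable m S : S < m -> Ff m S = F S.
Proof.
move=> H; rewrite /F. elim: m H => [|m IH] H //.
case: (ltngtP S m) => Hm.
- by rewrite -Ff_succ // IH.
- lia.
- by subst.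
Qed.

Lemma F_eq S : 0 < S -> F S = foldl (Fstep F S) (size w).+1 (iota 0 k).
Proof.
move=> HS; rewrite /F /=. case: eqP => [E|_]; first lia.
apply: foldl_ext => b i _; rewrite /Fstep.
case Hb: (bit S i) => //.
rewrite Ff_stable //. have := bit_lt Hb. lia.
Qed.

Lemma fold_le G S b l : foldl (Fstep G S) b l <= b.
Proof.
elim: l b => [|x l IH] b //=.
apply: leq_trans (IH _) _. rewrite /Fstep.
case: ifP => // _. case: ifP => // H; exact: ltnW.
Qed.

Lemma fold_min G S b l i : i \in l -> bit S i ->
  foldl (Fstep G S) b l <= Ef (G (S - 2 ^ i)) i.+1.
Proof.
elim: l b => [|x l IH] b //= Hi Hb.
move: Hi; rewrite in_cons => /orP [/eqP E|Hi]; last exact: IH.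
subst x. apply: leq_trans (fold_le _ _ _ _) _.
rewrite /Fstep Hb. case: ifP => //. rewrite ltnNge => /negbFE //.
Qed.

Lemma fold_cases G S b l : foldl (Fstep G S) b l = b \/
  exists i, [/\ i \in l, bit S i & foldl (Fstep G S) b l = Ef (G (S - 2 ^ i)) i.+1].
Proof.
elim: l b => [|x l IH] b /=; first by left.
case: (IH (Fstep G S b x)) => [->|[i [H1 H2 H3]]]; last first.
  by right; exists i; rewrite in_cons H1 orbT.
rewrite /Fstep. case Hb: (bit S x); last by left.
case: ifP => _; last by left.
by right; exists x; rewrite mem_head.
Qed.

Definition fits S q := exists s e : nat -> nat,
  (forall i, i < k -> bit S i ->
     [/\ s i < e i, e i < q, nth 0 w (s i) = i.+1 & nth 0 w (e i) = i.+1]) /\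
  (forall i j, i < k -> j < k -> bit S i -> bit S j -> i != j ->
     (e i < s j) || (e j < s i)).

Lemma F_spec S : S < 2 ^ k ->
  [/\ F S <= (size w).+1, F S <= size w -> fits S (F S) &
      forall q, q <= size w -> fits S q -> F S <= q].
Proof.
elim/ltn_ind: S => S IH HSk.
case: (posnP S) => [->|HS].
  rewrite /F /=. split => //.
  move=> _; exists (fun _ => 0), (fun _ => 0); split => i; by rewrite bit0n.
rewrite F_eq //. split.
- exact: fold_le.
- case: (fold_cases F S (size w).+1 (iota 0 k)) => [->|[i [Hi Hb ->]]].
    by rewrite ltnn.
  move=> HE.
  have Hik : i < k by move: Hi; rewrite mem_iota; lia.
  have HS' : S - 2 ^ i < S := bit_lt Hb.
  have [s0 [e0 [H1 H2 H3 H4 H5]]] := Ef_sound HE.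
  have HF' : F (S - 2 ^ i) <= size w by lia.
  have [_ Hsnd _] := IH _ HS' (leq_ltn_trans (leq_subr _ _) HSk).
  have [s [e [Hse Hdis]]] := Hsnd HF'.
  exists (fun j => if j == i then s0 else s j), (fun j => if j == i then e0 else e j).
  split.
  + move=> j Hj Hbj. case: eqP => [->|Hne]; first by split => //; rewrite -H3.
    have Hb' : bit (S - 2 ^ i) j by rewrite bit_sub // Hbj; apply/eqP.
    have [? ? ? ?] := Hse j Hj Hb'. split => //. lia.
  + move=> j1 j2 Hj1 Hj2 Hb1 Hb2 Hne.
    case: (eqVneq j1 i) => E1; case: (eqVneq j2 i) => E2.
    * by subst; rewrite eqxx in Hne.
    * have Hb' : bit (S - 2 ^ i) j2 by rewrite bit_sub // Hb2 E2.
      have [? ? ? ?] := Hse j2 Hj2 Hb'. apply/orP; right. lia.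
    * have Hb' : bit (S - 2 ^ i) j1 by rewrite bit_sub // Hb1 E1.
      have [? ? ? ?] := Hse j1 Hj1 Hb'. apply/orP; left. lia.
    * apply: Hdis => //; by rewrite bit_sub // ?Hb1 ?Hb2 ?E1 ?E2.
- move=> q Hq [s [e [Hse Hdis]]].
  (* pick i with maximal e among set bits *)
  have [i0 Hi0 Hb0] := bit_ex HS HSk.
  have : exists i, [/\ i < k, bit S i & forall j, j < k -> bit S j -> e j <= e i].
    pose P := fun x => [exists j : 'I_k, bit S j && (e j == x)].
    have HP : exists x, P x by exists (e i0); apply/existsP; exists (Ordinal Hi0); rewrite Hb0 eqxx.
    have HPb : forall x, P x -> x <= q.
      move=> x /existsP [j /andP [Hbj /eqP <-]].
      have [? ? ? ?] := Hse j (ltn_ord j) Hbj. lia.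
    have [x Px Hmax] := ex_maxnP HP HPb.
    case/existsP: Px => j /andP [Hbj /eqP Hej].
    exists j; split => // j' Hj' Hbj'. rewrite Hej. apply: Hmax.
    by apply/existsP; exists (Ordinal Hj'); rewrite Hbj' eqxx.
  move=> [i [Hik Hb Hmax]].
  have HS' : S - 2 ^ i < S := bit_lt Hb.
  have [_ _ Hcmp] := IH _ HS' (leq_ltn_trans (leq_subr _ _) HSk).
  have [Hsi Hei Hws Hwe] := Hse i Hik Hb.
  have Hfit : fits (S - 2 ^ i) (s i).
    exists s, e; split.
    + move=> j Hj; rewrite bit_sub // => /andP [Hbj Hne].
      have [? ? ? ?] := Hse j Hj Hbj. split => //.
      have := Hdis j i Hj Hik Hbj Hb Hne. have := Hmax j Hj Hbj. lia.
    + move=> j1 j2 Hj1 Hj2; rewrite !bit_sub // => /andP [Hb1 _] /andP [Hb2 _].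
      exact: Hdis.
  have Hsn : s i <= size w by lia.
  have HF := Hcmp (s i) Hsn Hfit.
  have Hin : i \in iota 0 k by rewrite mem_iota.
  apply: leq_trans (fold_min F (size w).+1 Hin Hb) _.
  have Hew : e i < size w by lia.
  apply: leq_trans (Ef_complete HF Hsi Hew Hws Hwe) _; lia.
Qed.

End Math.
Section Frame.
Variable ws : nat.
Variable P : seq instr.

Definition step pc (M : nat -> nat) : option (nat * (nat -> nat)) :=
  let W := 2 ^ ws in
  match nth IHalt P pc with
  | IHalt => None
  | IConst d c => Some (pc.+1, upd M d (c %% W))
  | IBin op d a b => Some (pc.+1, upd M d (eval_binop ws op (M a) (M b) %% W))
  | ILoad d a => Some (pc.+1, upd M d (M (M a)))
  | IStore a s => Some (pc.+1, upd M (M a) (M s))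
  | IJz a l => Some (if M a == 0 then l else pc.+1, M)
  | IJmp l => Some (l, M)
  end.

Fixpoint exec t pc M : option (nat * (nat -> nat)) :=
  match t with
  | 0 => Some (pc, M)
  | t'.+1 => if step pc M is Some (pc', M') then exec t' pc' M' else None
  end.

Lemma exec_S t pc M : exec t.+1 pc M =
  if step pc M is Some (pc', M') then exec t pc' M' else None.
Proof. by []. Qed.

Lemma run_step f pc M pc' M' : step pc M = Some (pc', M') ->
  run ws P f.+1 pc M = run ws P f pc' M'.
Proof. rewrite /step /=. by case: (nth IHalt P pc) => //= [d c|op d a b|d a|a s|a l|l] [<- <-]. Qed.

Lemma exec_run t pc M pc' M' f : exec t pc M = Some (pc', M') ->
  run ws P (t + f) pc M = run ws P f pc' M'.
Proof.
elim: t pc M => [|t IH] pc M; first by case=> <- <-.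
rewrite exec_S.
case E: (step pc M) => [[pc1 M1]|] // H.
rewrite [_.+1 + _]addSn (run_step _ E). exact: IH.
Qed.

Lemma exec_add a b pc M : exec (a + b) pc M =
  if exec a pc M is Some (pc', M') then exec b pc' M' else None.
Proof.
elim: a pc M => [|a IH] pc M //=.
case: (step pc M) => [[pc1 M1]|] //.
Qed.

Lemma run_halt f pc M : nth IHalt P pc = IHalt -> run ws P f.+1 pc M = Some M.
Proof. by move=> /= ->. Qed.

Lemma run_mono f g pc M M' : run ws P f pc M = Some M' -> f <= g ->
  run ws P g pc M = Some M'.
Proof.
elim: f g pc M => [|f IH] [|g] pc M //= H Hfg.
move: H. case: (nth IHalt P pc) => //= *; by apply: IH.
Qed.


End Frame.
Definition Prog : seq instr := [::
  (* 0 *) IJz 1 151;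
  (* 1 *) IJz 3 153;
  (* 2 *) IBin OAdd 1 1 1;
  (* 3 *) IBin OAdd 1 1 1;
  (* 4 *) IBin OAdd 1 1 1;
  (* 5 *) IBin OAdd 1 1 1;
  (* 6 *) IStore 1 0;
  (* 7 *) IConst 0 1;
  (* 8 *) IBin OAdd 0 0 1;
  (* 9 *) IStore 0 2;
  (* 10 *) IConst 0 2;
  (* 11 *) IBin OAdd 0 0 1;
  (* 12 *) IStore 0 3;
  (* 13 *) IConst 0 3;
  (* 14 *) IBin OAdd 0 0 1;
  (* 15 *) IStore 0 4;
  (* 16 *) IConst 0 4;
  (* 17 *) IBin OAdd 0 0 1;
  (* 18 *) IStore 0 5;
  (* 19 *) IConst 0 5;
  (* 20 *) IBin OAdd 0 0 1;
  (* 21 *) IStore 0 6;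
  (* 22 *) IConst 0 6;
  (* 23 *) IBin OAdd 0 0 1;
  (* 24 *) IStore 0 7;
  (* 25 *) IConst 0 7;
  (* 26 *) IBin OAdd 0 0 1;
  (* 27 *) IStore 0 8;
  (* 28 *) IConst 0 8;
  (* 29 *) IBin OAdd 0 0 1;
  (* 30 *) IStore 0 9;
  (* 31 *) IConst 0 9;
  (* 32 *) IBin OAdd 0 0 1;
  (* 33 *) IStore 0 10;
  (* 34 *) IConst 0 10;
  (* 35 *) IBin OAdd 0 0 1;
  (* 36 *) IStore 0 11;
  (* 37 *) IConst 0 11;
  (* 38 *) IBin OAdd 0 0 1;
  (* 39 *) IStore 0 12;
  (* 40 *) IConst 0 12;
  (* 41 *) IBin OAdd 0 0 1;
  (* 42 *) IStore 0 13;
  (* 43 *) IConst 0 13;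
  (* 44 *) IBin OAdd 0 0 1;
  (* 45 *) IStore 0 14;
  (* 46 *) IConst 0 14;
  (* 47 *) IBin OAdd 0 0 1;
  (* 48 *) IStore 0 15;
  (* 49 *) IConst 0 15;
  (* 50 *) IBin OAdd 0 0 1;
  (* 51 *) IStore 0 16;
  (* 52 *) IConst 0 16;
  (* 53 *) IBin OAdd 0 0 1;
  (* 54 *) IStore 0 17;
  (* 55 *) IConst 0 4;
  (* 56 *) IBin OShr 1 1 0;
  (* 57 *) IBin OShl 4 1 0;
  (* 58 *) ILoad 2 4;
  (* 59 *) IConst 7 1;
  (* 60 *) IBin OAdd 4 4 7;
  (* 61 *) IConst 17 2;
  (* 62 *) IBin OAdd 3 2 7;
  (* 63 *) IBin OAdd 16 1 7;
  (* 64 *) IBin OAdd 5 4 1;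
  (* 65 *) IBin OMul 10 16 3;
  (* 66 *) IBin OAdd 10 10 3;
  (* 67 *) IBin OAdd 6 5 10;
  (* 68 *) IBin OShl 14 7 2;
  (* 69 *) IConst 8 16;
  (* 70 *) IBin OLt 10 8 1;
  (* 71 *) IJz 10 78;
  (* 72 *) IBin OAdd 11 8 17;
  (* 73 *) IBin OAdd 12 8 4;
  (* 74 *) ILoad 11 11;
  (* 75 *) IStore 12 11;
  (* 76 *) IBin OAdd 8 8 7;
  (* 77 *) IJmp 70;
  (* 78 *) IBin OMul 10 1 3;
  (* 79 *) IBin OAdd 10 10 5;
  (* 80 *) IConst 9 0;
  (* 81 *) IBin OAdd 12 3 3;
  (* 82 *) IBin OLt 11 9 12;
  (* 83 *) IJz 11 88;
  (* 84 *) IBin OAdd 11 10 9;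
  (* 85 *) IStore 11 1;
  (* 86 *) IBin OAdd 9 9 7;
  (* 87 *) IJmp 82;
  (* 88 *) IBin OMul 8 1 7;
  (* 89 *) IJz 8 110;
  (* 90 *) IBin OSub 8 8 7;
  (* 91 *) IBin OAdd 10 8 4;
  (* 92 *) ILoad 10 10;
  (* 93 *) IBin OMul 11 8 3;
  (* 94 *) IBin OAdd 11 11 5;
  (* 95 *) IBin OAdd 12 11 3;
  (* 96 *) IConst 9 0;
  (* 97 *) IBin OLt 13 9 3;
  (* 98 *) IJz 13 89;
  (* 99 *) IBin OEq 13 10 9;
  (* 100 *) IJz 13 104;
  (* 101 *) IBin OAdd 13 11 9;
  (* 102 *) IStore 13 8;
  (* 103 *) IJmp 108;
  (* 104 *) IBin OAdd 13 12 9;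
  (* 105 *) ILoad 15 13;
  (* 106 *) IBin OAdd 13 11 9;
  (* 107 *) IStore 13 15;
  (* 108 *) IBin OAdd 9 9 7;
  (* 109 *) IJmp 97;
  (* 110 *) IConst 10 0;
  (* 111 *) IStore 6 10;
  (* 112 *) IConst 13 1;
  (* 113 *) IBin OLt 10 13 14;
  (* 114 *) IJz 10 146;
  (* 115 *) IBin OMul 15 16 7;
  (* 116 *) IConst 9 0;
  (* 117 *) IBin OLt 10 9 2;
  (* 118 *) IJz 10 142;
  (* 119 *) IBin OShr 10 13 9;
  (* 120 *) IBin OMod 10 10 17;
  (* 121 *) IJz 10 140;
  (* 122 *) IBin OShl 11 7 9;
  (* 123 *) IBin OSub 11 13 11;
  (* 124 *) IBin OAdd 11 11 6;
  (* 125 *) ILoad 11 11;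
  (* 126 *) IBin OAdd 12 9 7;
  (* 127 *) IBin OMul 11 11 3;
  (* 128 *) IBin OAdd 11 11 5;
  (* 129 *) IBin OAdd 11 11 12;
  (* 130 *) ILoad 11 11;
  (* 131 *) IBin OAdd 11 11 7;
  (* 132 *) IBin OMul 11 11 3;
  (* 133 *) IBin OAdd 11 11 5;
  (* 134 *) IBin OAdd 11 11 12;
  (* 135 *) ILoad 11 11;
  (* 136 *) IBin OAdd 11 11 7;
  (* 137 *) IBin OLt 10 11 15;
  (* 138 *) IJz 10 140;
  (* 139 *) IBin OMul 15 11 7;
  (* 140 *) IBin OAdd 9 9 7;
  (* 141 *) IJmp 117;
  (* 142 *) IBin OAdd 10 6 13;
  (* 143 *) IStore 10 15;
  (* 144 *) IBin OAdd 13 13 7;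
  (* 145 *) IJmp 113;
  (* 146 *) IBin OAdd 10 6 14;
  (* 147 *) IBin OSub 10 10 7;
  (* 148 *) ILoad 10 10;
  (* 149 *) IBin OLt 0 10 16;
  (* 150 *) IHalt;
  (* 151 *) IBin OEq 0 0 1;
  (* 152 *) IHalt;
  (* 153 *) IConst 0 0;
  (* 154 *) IHalt
].
Arguments upd M a v i /.

Definition reach ws pc M pc' (Q : (nat -> nat) -> Prop) b :=
  exists t M', [/\ t <= b, exec ws Prog t pc M = Some (pc', M') & Q M'].

Lemma reach_step ws pc M pc' Q b :
  (match step ws Prog pc M with Some (pc1, M1) => reach ws pc1 M1 pc' Q b | None => False end) ->
  reach ws pc M pc' Q b.+1.
Proof.
case E: (step ws Prog pc M) => [[pc1 M1]|] // [t [M' [H1 H2 H3]]].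
exists t.+1, M'; split => //. by rewrite exec_S E.
Qed.

Lemma reach_done ws pc M (Q : (nat -> nat) -> Prop) b : Q M -> reach ws pc M pc Q b.
Proof. by move=> H; exists 0, M; split. Qed.

Lemma reach_weak ws pc M pc' Q b b' : b <= b' -> reach ws pc M pc' Q b -> reach ws pc M pc' Q b'.
Proof. move=> H [t [M' [H1 H2 H3]]]; exists t, M'; split => //; exact: leq_trans H. Qed.

Lemma reach_seq ws pc M pc1 pc2 Q1 Q2 b1 b2 :
  reach ws pc M pc1 Q1 b1 -> (forall M1, Q1 M1 -> reach ws pc1 M1 pc2 Q2 b2) ->
  reach ws pc M pc2 Q2 (b1 + b2).
Proof.
move=> [t1 [M1 [H1 H2 H3]]] H. have [t2 [M2 [H4 H5 H6]]] := H _ H3.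
exists (t1 + t2), M2; split => //; first exact: leq_add.
by rewrite exec_add H2.
Qed.

Lemma reach_post ws pc M pc' (Q Q' : (nat -> nat) -> Prop) b :
  (forall M, Q M -> Q' M) -> reach ws pc M pc' Q b -> reach ws pc M pc' Q' b.
Proof. move=> H [t [M' [H1 H2 H3]]]; exists t, M'; split => //; exact: H. Qed.

Section Machine.
Variables (k : nat) (w : seq nat) (ws : nat).
Hypothesis Hword : is_word k w.
Hypothesis Hn : 2 <= size w.
Hypothesis HW : 1000 * (k * 2 ^ k + k * size w + 1) <= 2 ^ ws.

Local Notation n := (size w).
Local Notation D := (16 * size w + 1).
Local Notation TBv := (17 * size w + 1).
Local Notation NK := ((size w).+1 * k.+1).
Local Notation FBv := (17 * size w + 1 + (NK + k.+1)).

Lemma k_pos : 0 < k.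
Proof.
move: Hword Hn; rewrite /is_word; case: w => [|a s] //= /andP [/andP [H1 H2] _] _; lia.
Qed.

Lemma HNK : NK = k * n + n + k + 1.
Proof. rewrite mulSn mulnS; lia. Qed.

Lemma HB : FBv + 2 ^ k + 64 < 2 ^ ws.
Proof.
have Hk := k_pos.
have H1 : n <= k * n by rewrite leq_pmull.
have H2 : 2 ^ k <= k * 2 ^ k by rewrite leq_pmull.
have H3 : k <= k * 2 ^ k by rewrite leq_pmulr // expn_gt0.
move: HW; rewrite HNK. lia.
Qed.

Definition Const (M : nat -> nat) :=
  [/\ M 1 = n, M 2 = k, M 3 = k.+1, M 4 = D &
   [/\ M 5 = TBv, M 6 = FBv, M 7 = 1, M 14 = 2 ^ k & [/\ M 16 = n.+1 & M 17 = 2]]].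

Lemma HnK : NK = n * k.+1 + k.+1.
Proof. by rewrite mulSn addnC. Qed.

Definition Input (M : nat -> nat) := forall j, j < n -> M (D + j) = nth 0 w j.

Lemma msmall x : x <= FBv + 2 ^ k + 64 -> x %% 2 ^ ws = x.
Proof. move=> H; apply: modn_small; exact: leq_ltn_trans H HB. Qed.

Lemma bool_small (b : bool) : (b : nat) %% 2 ^ ws = b.
Proof. apply: msmall; case: b => /=; lia. Qed.

Ltac kill_eq := repeat match goal with |- context [?x == ?a] =>
  (rewrite (_ : (x == a) = false); [| apply/eqP; lia]) end.

Lemma submod x y : y <= x -> x < 2 ^ ws -> (x + 2 ^ ws - y) %% 2 ^ ws = x - y.
Proof.
move=> H1 H2. rewrite -addnBAC // modnDr modn_small //.
exact: leq_ltn_trans (leq_subr _ _) H2.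
Qed.

Lemma exp24 : 2 ^ 4 = 16. Proof. by []. Qed.

Ltac rewrite_regs := repeat match goal with
  | H : ?M ?x = _ |- context [?M ?x] => is_var M; rewrite H
  | H : (?a < ?b) = _ |- context [?a < ?b] => rewrite H
  | H : (?a == ?b) = _ |- context [?a == ?b] => rewrite H
  end.
Ltac msm0 := repeat match goal with |- context [?x %% 2 ^ ws] => rewrite (msmall (x := x)); [|lia] end.
Ltac msm := rewrite ?bool_small; msm0;
  repeat match goal with |- context [(?x + 2 ^ ws - ?y) %% 2 ^ ws] =>
    rewrite (submod (x := x) (y := y)); [| lia | have := HB; lia] end; msm0.
Ltac st := apply: reach_step; rewrite /step /=; kill_eq; simpl; rewrite_regs; simpl; rewrite ?mul1n ?muln1 ?exp24; msm; rewrite ?subn1 /=; kill_eq; simpl; rewrite_regs.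

Ltac cst H := case: H => H1 H2 H3 H4 [H5 H6 H7 H8 [H9 H10]].

Lemma copy_loop m : forall j M, n - j = m -> 16 <= j -> Const M -> M 8 = j ->
  (forall j', j' < j -> j' < n -> M (D + j') = nth 0 w j') ->
  (forall j', j <= j' < n -> M (2 + j') = nth 0 w j') ->
  reach ws 70 M 78 (fun M' => Const M' /\ Input M') (8 * m + 2).
Proof.
elim: m => [|m IH] j M Hm Hj HC HM8 Hdone Hsrc.
- have Hjn : (j < n) = false by apply/negbTE; rewrite -leqNgt; lia.
  have HC' := HC. cst HC'.
  do 2 apply: reach_step; rewrite /step /= HM8 H1 Hjn bool_small /=.
  apply: reach_done; split.
  + by split.
  + move=> j' Hj' /=; kill_eq; apply: Hdone => //; lia.
- have Hjn : (j < n) = true by lia.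
  have HC' := HC. cst HC'.
  apply: reach_weak (_ : 8 + (8 * m + 2) <= _) _; first lia.
  apply: (reach_seq (Q1 := fun M' => Const M' /\ M' 8 = j.+1 /\
     (forall j', j' < j.+1 -> j' < n -> M' (D + j') = nth 0 w j') /\
     (forall j', j.+1 <= j' < n -> M' (2 + j') = nth 0 w j'))); last first.
    move=> M1 [HC1 [H81 [Hd1 Hs1]]]; apply: (IH j.+1) => //; lia.
  do 8 st.
  apply: reach_done; split; [|split; [|split]].
  + rewrite /Const /=; kill_eq; rewrite_regs; by split.
  + by rewrite /=; kill_eq; rewrite addn1.
  + move=> j' Hj' Hj'n /=; kill_eq.
    case: eqP => E.
    * have -> : j' = j by lia.
      by rewrite addnC Hsrc //; lia.
    * apply: Hdone => //; lia.
  + move=> j' Hj' /=; kill_eq. apply: Hsrc; lia.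
Qed.


Ltac cconst := rewrite /Const /=; kill_eq; rewrite_regs; by split.

Lemma rows_loop m : forall i M, (k.+1 + k.+1) - i = m -> Const M -> Input M ->
  M 9 = i -> M 10 = TBv + n * k.+1 -> M 12 = k.+1 + k.+1 ->
  (forall c, c < i -> M (TBv + n * k.+1 + c) = n) ->
  reach ws 82 M 88 (fun M' => [/\ Const M', Input M' &
     forall c, c < k.+1 + k.+1 -> M' (TBv + n * k.+1 + c) = n]) (6 * m + 2).
Proof.
have := HnK => HnK.
elim: m => [|m IH] i M Hm HC HI HM9 HM10 HM12 Hdone; have HC' := HC; cst HC'.
- have Hin : (i < k.+1 + k.+1) = false by apply/negbTE; rewrite -leqNgt; lia.
  do 2 st.
  apply: reach_done; split.
  + cconst.
  + move=> j Hj /=; kill_eq; exact: HI.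
  + move=> c Hc /=; kill_eq; apply: Hdone; lia.
- have Hin : (i < k.+1 + k.+1) = true by lia.
  apply: reach_weak (_ : 6 + (6 * m + 2) <= _) _; first lia.
  apply: (reach_seq (Q1 := fun M' => [/\ Const M', Input M', M' 9 = i.+1 & [/\ M' 10 = TBv + n * k.+1,
     M' 12 = k.+1 + k.+1 & forall c, c < i.+1 -> M' (TBv + n * k.+1 + c) = n]])); last first.
    move=> M1 [HC1 HI1 H91 [H101 H121 Hd1]]; apply: (IH i.+1) => //; lia.
  do 6 st.
  apply: reach_done; split.
  + cconst.
  + move=> j Hj /=; kill_eq; exact: HI.
  + by rewrite /=; kill_eq; rewrite addn1.
  + split; [by rewrite /=; kill_eq | by rewrite /=; kill_eq |].
    move=> c Hc /=; kill_eq. case: eqP => E; first by [].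
    apply: Hdone; lia.
Qed.

Lemma rows_phase M : Const M -> Input M ->
  reach ws 78 M 88 (fun M' => [/\ Const M', Input M' &
     forall c, c < k.+1 + k.+1 -> M' (TBv + n * k.+1 + c) = n]) (12 * k + 20).
Proof.
have := HnK => HnK.
move=> HC HI; have HC' := HC; cst HC'.
apply: reach_weak (_ : 4 + (6 * (k.+1 + k.+1) + 2) <= _) _; first lia.
apply: (reach_seq (Q1 := fun M' => [/\ Const M', Input M', M' 9 = 0 & [/\ M' 10 = TBv + n * k.+1,
     M' 12 = k.+1 + k.+1 & forall c, c < 0 -> M' (TBv + n * k.+1 + c) = n]])); last first.
  move=> M1 [HC1 HI1 H91 [H101 H121 Hd1]]; apply: (rows_loop (i := 0)) => //; lia.
do 4 st.
apply: reach_done; split.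
+ cconst.
+ move=> j Hj /=; kill_eq; exact: HI.
+ by [].
+ split; [by rewrite /=; kill_eq; lia | by rewrite /=; kill_eq | by []].
Qed.


Lemma addr_eq p c p' c' : c < k.+1 -> c' < k.+1 ->
  (p * k.+1 + c == p' * k.+1 + c') = (p == p') && (c == c').
Proof.
move=> Hc Hc'. apply/eqP/andP => [E|[/eqP -> /eqP ->]] //.
have E1 := congr1 (divn^~ k.+1) E; have E2 := congr1 (modn^~ k.+1) E.
move: E1 E2 => /=; rewrite !divnMDl // !divn_small // !addn0 !modnMDl !modn_small // => -> ->.
by split.
Qed.

Lemma tab_neq p p' c i : c < k.+1 -> i < k.+1 -> p' != p ->
  (TBv + (p' * k.+1 + c) == TBv + p * k.+1 + i) = false.
Proof. move=> H1 H2 H3; rewrite -[TBv + p * k.+1 + i]addnA eqn_add2l addr_eq // (negbTE H3) //. Qed.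

Lemma tab_eqv p c i : c < k.+1 -> i < k.+1 ->
  (TBv + (p * k.+1 + c) == TBv + p * k.+1 + i) = (c == i).
Proof. move=> H1 H2; rewrite -[TBv + p * k.+1 + i]addnA eqn_add2l addr_eq // eqxx //. Qed.

Definition TabFrom p (M : nat -> nat) := forall p' c, p <= p' -> p' <= n.+1 -> c <= k ->
  M (TBv + (p' * k.+1 + c)) = Nf w p' c.

Lemma tab_inner p (Hpn : p < n) m : forall i M, k.+1 - i = m -> Const M -> Input M ->
  M 8 = p -> M 10 = nth 0 w p -> M 11 = TBv + p * k.+1 -> M 12 = TBv + p * k.+1 + k.+1 ->
  M 9 = i -> TabFrom p.+1 M -> (forall c, c < i -> M (TBv + (p * k.+1 + c)) = Nf w p c) ->
  reach ws 97 M 89 (fun M' => [/\ Const M', Input M', M' 8 = p & TabFrom p M']) (10 * m + 2).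
Proof.
have := HnK => HnK.
have HpK : p * k.+1 + k.+1 <= n * k.+1 by rewrite addnC -mulSn leq_mul2r Hpn orbT.
elim: m => [|m IH] i M Hm HC HI HM8 HM10 HM11 HM12 HM9 Htab Hdone; have HC' := HC; cst HC'.
- have Hin : (i < k.+1) = false by apply/negbTE; rewrite -leqNgt; lia.
  do 2 st.
  apply: reach_done; split.
  + cconst.
  + move=> j Hj /=; kill_eq; exact: HI.
  + by [].
  + move=> p' c Hp' Hp'n Hc /=; kill_eq.
    case: (ltngtP p p') => E.
    * by apply: Htab.
    * lia.
    * subst p'. apply: Hdone; lia.
- have Hin : (i < k.+1) = true by lia.
  apply: reach_weak (_ : 10 + (10 * m + 2) <= _) _; first lia.
  apply: (reach_seq (Q1 := fun M' => [/\ Const M', Input M', M' 8 = p, M' 10 = nth 0 w p &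
     [/\ M' 11 = TBv + p * k.+1, M' 12 = TBv + p * k.+1 + k.+1, M' 9 = i.+1, TabFrom p.+1 M' &
      forall c, c < i.+1 -> M' (TBv + (p * k.+1 + c)) = Nf w p c]])); last first.
    move=> M1 [HC1 HI1 H81 H101 [H111 H121 H91 Ht1 Hd1]]; apply: (IH i.+1) => //; lia.
  have HNf := Nf_step i Hpn.
  
  case Heq: (nth 0 w p == i).
  + do 9 st.
    apply: reach_done; split.
    * cconst.
    * move=> j Hj /=; kill_eq; exact: HI.
    * by rewrite /=; kill_eq.
    * by rewrite /=; kill_eq.
    * split.
      -- by rewrite /=; kill_eq.
      -- by rewrite /=; kill_eq.
      -- by rewrite /=; kill_eq; rewrite addn1.
      -- move=> p' c Hp' Hp'n Hc /=; kill_eq. rewrite tab_neq; try lia.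
         by apply: Htab.
      -- move=> c Hc /=; kill_eq. rewrite tab_eqv; try lia.
         case: eqP => E; first by subst c; rewrite HNf Heq.
         apply: Hdone; lia.
  + have Hrd : M (TBv + p * k.+1 + k.+1 + i) = Nf w p.+1 i.
      rewrite (_ : TBv + p * k.+1 + k.+1 + i = TBv + (p.+1 * k.+1 + i)); last by rewrite mulSn; lia.
      apply: Htab => //; lia.
    do 10 st.
    apply: reach_done; split.
    * cconst.
    * move=> j Hj /=; kill_eq; exact: HI.
    * by rewrite /=; kill_eq.
    * by rewrite /=; kill_eq.
    * split.
      -- by rewrite /=; kill_eq.
      -- by rewrite /=; kill_eq.
      -- by rewrite /=; kill_eq; rewrite addn1.
      -- move=> p' c Hp' Hp'n Hc /=; kill_eq. rewrite tab_neq; try lia.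
         by apply: Htab.
      -- move=> c Hc /=; kill_eq. rewrite tab_eqv; try lia.
         case: eqP => E; first by subst c; rewrite HNf Heq.
         apply: Hdone; lia.
Qed.

Lemma tab_outer m : forall M, m <= n -> Const M -> Input M -> M 8 = m -> TabFrom m M ->
  reach ws 89 M 110 (fun M' => Const M' /\ TabFrom 0 M') (m * (10 * k.+1 + 10) + 1).
Proof.
have := HnK => HnK.
elim: m => [|m IH] M Hmn HC HI HM8 Htab; have HC' := HC; cst HC'.
- st. apply: reach_done; split.
  + cconst.
  + exact: Htab.
- have Hm : m < n by lia.
  apply: reach_weak (_ : 8 + (10 * k.+1 + 2) + (m * (10 * k.+1 + 10) + 1) <= _) _.
    rewrite mulSn; lia.
  apply: (reach_seq (pc1 := 89) (Q1 := fun M' => [/\ Const M', Input M', M' 8 = m & TabFrom m M'])); last first.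
    move=> M1 [HC1 HI1 H81 Ht1]; apply: IH => //; lia.
  have HpK : m * k.+1 + k.+1 <= n * k.+1 by rewrite addnC -mulSn leq_mul2r Hm orbT.
  have Hrd : M (m + D) = nth 0 w m by rewrite addnC; apply: HI.
  apply: (reach_seq (Q1 := fun M' => [/\ Const M', Input M', M' 8 = m, M' 10 = nth 0 w m &
     [/\ M' 11 = TBv + m * k.+1, M' 12 = TBv + m * k.+1 + k.+1, M' 9 = 0, TabFrom m.+1 M' &
      forall c, c < 0 -> M' (TBv + (m * k.+1 + c)) = Nf w m c]])); last first.
    move=> M1 [HC1 HI1 H81 H101 [H111 H121 H91 Ht1 Hd1]].
    apply: (tab_inner Hm (i := 0)) => //; lia.
  do 8 st.
  apply: reach_done; split.
  + cconst.
  + move=> j Hj /=; kill_eq; exact: HI.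
  + by rewrite /=; kill_eq.
  + by rewrite /=; kill_eq.
  + split.
    * rewrite /=; kill_eq; lia.
    * rewrite /=; kill_eq; lia.
    * by rewrite /=; kill_eq.
    * move=> p' c Hp' Hp'n Hc /=; kill_eq. by apply: Htab.
    * by [].
Qed.


Definition Dp S (M : nat -> nat) := forall S', S' < S -> M (FBv + S') = F k w S'.

Definition fold S i := foldl (Fstep w (F k w) S) n.+1 (iota 0 i).

Lemma fold_S S i : fold S i.+1 = Fstep w (F k w) S (fold S i) i.
Proof. by rewrite /fold -[i.+1]addn1 iotaD foldl_cat /=. Qed.

Lemma dp_inner S (HS : 0 < S) (HSk : S < 2 ^ k) m : forall i M, k - i = m -> i <= k ->
  Const M -> TabFrom 0 M -> Dp S M -> M 13 = S -> M 9 = i -> M 15 = fold S i ->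
  reach ws 117 M 142 (fun M' => [/\ Const M', TabFrom 0 M', Dp S M', M' 13 = S & M' 15 = fold S k])
    (25 * m + 2).
Proof.
have := HnK => HnK.
have Hfold : forall i, fold S i <= n.+1 by move=> i; apply: fold_le.
elim: m => [|m IH] i M Hm Hik0 HC HT HD HM13 HM9 HM15; have HC' := HC; cst HC'.
- have Hik : (i < k) = false by apply/negbTE; rewrite -leqNgt; lia.
  have Ei : i = k by lia.
  do 2 st.
  apply: reach_done; split.
  + cconst.
  + move=> p' c Hp' Hp'n Hc /=; kill_eq. exact: HT.
  + move=> S' HS' /=; kill_eq. exact: HD.
  + by [].
  + by rewrite /= -Ei.
- have Hik : (i < k) = true by lia.
  apply: reach_weak (_ : 25 + (25 * m + 2) <= _) _; first lia.
  apply: (reach_seq (Q1 := fun M' => [/\ Const M', TabFrom 0 M', Dp S M', M' 13 = S &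
     M' 9 = i.+1 /\ M' 15 = fold S i.+1])); last first.
    move=> M1 [HC1 HT1 HD1 H131 [H91 H151]]; apply: (IH i.+1) => //; lia.
  have Hdiv : S %/ 2 ^ i <= S by apply: leq_div.
  have Hmod : S %/ 2 ^ i %% 2 <= 1 by rewrite -ltnS ltn_mod.
  have H2i : 2 ^ i <= 2 ^ k by rewrite leq_pexp2l //; lia.
  do 4 st.
  have Hb2 : (S %/ 2 ^ i) %% 2 = bit S i by rewrite modn2.
  case Hbit: (bit S i).
  + have Hz : ((S %/ 2 ^ i) %% 2 == 0) = false by rewrite Hb2 Hbit.
    have Hle := bit_le Hbit.
    have Hq := F_spec w (leq_ltn_trans (leq_subr (2 ^ i) S) HSk).
    case: Hq => Hq _ _.
    have Hrq : M (S - 2 ^ i + FBv) = F k w (S - 2 ^ i) by rewrite addnC; apply: HD; apply: bit_lt.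
    move: Hq Hrq. set q := F k w (S - 2 ^ i) => Hq Hrq.
    have HqK : q * k.+1 <= NK by rewrite leq_mul2r Hq orbT.
    do 5 st.
    have Hrs : M (q * k.+1 + TBv + (i + 1)) = Nf w q i.+1.
      rewrite (_ : q * k.+1 + TBv + (i + 1) = TBv + (q * k.+1 + i.+1)); last lia.
      apply: HT => //; lia.
    have Hs := Nf_le w q i.+1.
    move: Hs Hrs. set s := Nf w q i.+1 => Hs Hrs.
    have HsK : (s + 1) * k.+1 <= NK by rewrite leq_mul2r addn1 ltnS Hs orbT.
    have Hre : M ((s + 1) * k.+1 + TBv + (i + 1)) = Nf w s.+1 i.+1.
      rewrite (_ : (s + 1) * k.+1 + TBv + (i + 1) = TBv + (s.+1 * k.+1 + i.+1)); last by rewrite addn1; lia.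
      apply: HT => //; lia.
    have He := Nf_le w s.+1 i.+1.
    move: He Hre. set e := Nf w s.+1 i.+1 => He Hre.
    have HEf : Ef w q i.+1 = e.+1 by [].
    case Hlt: (e + 1 < fold S i).
    * do 16 st.
      apply: reach_done; split.
      -- cconst.
      -- move=> p' c Hp' Hp'n Hc /=; kill_eq. exact: HT.
      -- move=> S' HS' /=; kill_eq. exact: HD.
      -- by [].
      -- split; first by rewrite /= addn1.
         rewrite /= fold_S /Fstep Hbit HEf. move: Hlt; rewrite addn1 => ->; lia.
    * do 15 st.
      apply: reach_done; split.
      -- cconst.
      -- move=> p' c Hp' Hp'n Hc /=; kill_eq. exact: HT.
      -- move=> S' HS' /=; kill_eq. exact: HD.
      -- by [].
      -- split; first by rewrite /= addn1.
         rewrite /= fold_S /Fstep Hbit HEf. move: Hlt; rewrite addn1 => ->; lia.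
  + have Hz : ((S %/ 2 ^ i) %% 2 == 0) = true by rewrite Hb2 Hbit.
    do 3 st.
    apply: reach_done; split.
    * cconst.
    * move=> p' c Hp' Hp'n Hc /=; kill_eq. exact: HT.
    * move=> S' HS' /=; kill_eq. exact: HD.
    * by [].
    * split; first by rewrite /= addn1.
      by rewrite /= fold_S /Fstep Hbit.
Qed.


Lemma fold0 S : fold S 0 = n.+1.
Proof. by []. Qed.

Lemma dp_outer m : forall S M, 2 ^ k - S = m -> 0 < S -> S <= 2 ^ k ->
  Const M -> TabFrom 0 M -> Dp S M -> M 13 = S ->
  reach ws 113 M 146 (fun M' => Const M' /\ Dp (2 ^ k) M') (m * (25 * k + 10) + 2).
Proof.
have := HnK => HnK.
elim: m => [|m IH] S M Hm HS HSk HC HT HD HM13; have HC' := HC; cst HC'.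
- have Hlt : (S < 2 ^ k) = false by apply/negbTE; rewrite -leqNgt; lia.
  have ES : S = 2 ^ k by lia.
  do 2 st.
  apply: reach_done; split.
  + cconst.
  + move=> S' HS' /=; kill_eq. apply: HD; lia.
- have Hlt : (S < 2 ^ k) = true by lia.
  have HSk' : S < 2 ^ k by lia.
  apply: reach_weak (_ : (4 + (25 * k + 2)) + 4 + (m * (25 * k + 10) + 2) <= _) _.
    rewrite mulSn; lia.
  apply: (reach_seq (pc1 := 113) (Q1 := fun M' => [/\ Const M', TabFrom 0 M', Dp S.+1 M' & M' 13 = S.+1])); last first.
    move=> M1 [HC1 HT1 HD1 H131]; apply: (IH S.+1) => //; lia.
  apply: (reach_seq (pc1 := 142) (Q1 := fun M' => [/\ Const M', TabFrom 0 M', Dp S M', M' 13 = S & M' 15 = fold S k])).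
    apply: (reach_seq (pc1 := 117) (Q1 := fun M' => [/\ Const M', TabFrom 0 M', Dp S M', M' 13 = S &
        M' 9 = 0 /\ M' 15 = fold S 0])).
      do 4 st.
      apply: reach_done; split.
      * cconst.
      * move=> p' c Hp' Hp'n Hc /=; kill_eq. exact: HT.
      * move=> S' HS' /=; kill_eq. exact: HD.
      * by [].
      * by [].
    move=> M1 [HC1 HT1 HD1 H131 [H91 H151]].
    apply: (dp_inner HS HSk' (i := 0)) => //; lia.
  move=> M1 [HC1 HT1 HD1 H131 H151]; have HC1' := HC1; case: HC1' => G1 G2 G3 G4 [G5 G6 G7 G8 [G9 G10]].
  have HF : fold S k = F k w S by rewrite F_eq.
  do 4 st.
  apply: reach_done; split.
  + cconst.
  + move=> p' c Hp' Hp'n Hc /=.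
    have : p' * k.+1 <= NK by rewrite leq_mul2r Hp'n orbT.
    move=> HpK; kill_eq. exact: HT1.
  + move=> S' HS' /=; kill_eq. case: eqP => E.
    * have -> : S' = S by lia.
      by rewrite HF.
    * apply: HD1; lia.
  + by rewrite /= addn1.
Qed.

Lemma dp_phase M : Const M -> TabFrom 0 M ->
  reach ws 110 M 146 (fun M' => Const M' /\ Dp (2 ^ k) M') (3 + ((2 ^ k - 1) * (25 * k + 10) + 2)).
Proof.
have := HnK => HnK.
move=> HC HT; have HC' := HC; cst HC'.
apply: (reach_seq (pc1 := 113) (Q1 := fun M' => [/\ Const M', TabFrom 0 M', Dp 1 M' & M' 13 = 1])).
  do 3 st.
  apply: reach_done; split.
  + cconst.
  + move=> p' c Hp' Hp'n Hc /=.
    have : p' * k.+1 <= NK by rewrite leq_mul2r Hp'n orbT.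
    move=> HpK; kill_eq. exact: HT.
  + move=> S' HS' /=. have -> : S' = 0 by lia.
    kill_eq. by rewrite addn0 eqxx.
  + by rewrite /=.
move=> M1 [HC1 HT1 HD1 H131]; apply: dp_outer => //.
by rewrite expn_gt0.
Qed.

Lemma final_phase M : Const M -> Dp (2 ^ k) M ->
  reach ws 146 M 150 (fun M' => M' 0 = (F k w (2 ^ k).-1 < n.+1)) 4.
Proof.
have := HnK => HnK.
move=> HC HD; have HC' := HC; cst HC'.
have H2k : 0 < 2 ^ k by rewrite expn_gt0.
have Hrd : M (FBv + 2 ^ k).-1 = F k w (2 ^ k).-1.
  rewrite -subn1 -addnBA // subn1; apply: HD. by rewrite prednK // ltnSn.
do 4 st.
by apply: reach_done.
Qed.


Lemma tab_phase M : Const M -> Input M ->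
  (forall c, c < k.+1 + k.+1 -> M (TBv + n * k.+1 + c) = n) ->
  reach ws 88 M 110 (fun M' => Const M' /\ TabFrom 0 M') (1 + (n * (10 * k.+1 + 10) + 1)).
Proof.
have := HnK => HnK.
move=> HC HI Hrow; have HC' := HC; cst HC'.
apply: (reach_seq (pc1 := 89) (Q1 := fun M' => [/\ Const M', Input M', M' 8 = n & TabFrom n M'])).
  st. apply: reach_done; split.
  + cconst.
  + move=> j Hj /=; kill_eq; exact: HI.
  + by [].
  + move=> p' c Hp' Hp'n Hc /=; kill_eq.
    rewrite Nf_end //.
    case: (ltngtP p' n) => E; first lia.
    * have -> : p' = n.+1 by lia.
      rewrite mulSn (_ : TBv + (k.+1 + n * k.+1 + c) = TBv + n * k.+1 + (k.+1 + c)); last lia.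
      apply: Hrow; lia.
    * subst p'. rewrite addnA. apply: Hrow; lia.
move=> M1 [HC1 HI1 H81 HT1]. by apply: tab_outer.
Qed.

Lemma word_pos j : j < n -> 0 < nth 0 w j.
Proof.
move=> Hj; move: Hword; rewrite /is_word => /all_nthP H.
by have /andP [] := H 0 j Hj.
Qed.

Lemma save_instr j : j < 16 -> [/\ nth IHalt Prog (7 + 3 * j) = IConst 0 j.+1,
  nth IHalt Prog (7 + 3 * j).+1 = IBin OAdd 0 0 1 &
  nth IHalt Prog (7 + 3 * j).+2 = IStore 0 (2 + j)].
Proof.
move=> H; do 16 (case: j H => [|j] H; first by []). by [].
Qed.

Lemma save_block j : j <= 16 -> forall M, M 1 = 16 * n ->
  reach ws 7 M (7 + 3 * j) (fun M' => M' 1 = 16 * n /\ forall x, x != 0 ->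
     M' x = if (16 * n + 1 <= x) && (x < 16 * n + 1 + j) then M (x - 16 * n + 1) else M x) (3 * j).
Proof.
elim: j => [|j IH] Hj M HM1.
  rewrite muln0 addn0; apply: reach_done; split => // x _.
  by rewrite addn0 ltnNge andbN.
apply: reach_weak (_ : 3 * j + 3 <= _) _; first lia.
apply: reach_seq; first exact: (IH (ltnW Hj) M HM1).
move=> M1 [H11 Hf].
have [I1 I2 I3] := save_instr Hj.
have Hs : M1 (2 + j) = M (2 + j).
  rewrite Hf //. have -> : (16 * n + 1 <= 2 + j) = false by apply/negbTE; rewrite -ltnNge; lia.
  by [].
apply: reach_step; rewrite /step I1 /=.
apply: reach_step; rewrite /step I2 /=. rewrite H11.
apply: reach_step; rewrite /step I3 /=.
rewrite !msmall; try (have := HB; lia).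
rewrite Hs (_ : 7 + 3 * j.+1 = (7 + 3 * j).+3); last lia.
apply: reach_done; split.
  by rewrite /=; kill_eq.
move=> x Hx /=. rewrite (negbTE Hx).
case: eqP => E.
  rewrite E. case: ifP; last by lia.
  move=> _; congr M; lia.
rewrite Hf //. case: ifP; case: ifP => // H1 H2; lia.
Qed.


Arguments init_mem k w i /.


Lemma prologue : reach ws 0 (init_mem k w) 70 (fun M => [/\ Const M, M 8 = 16,
  (forall j, j < 16 -> j < n -> M (D + j) = nth 0 w j) &
  (forall j, 16 <= j < n -> M (2 + j) = nth 0 w j)]) 70.
Proof.
have := HnK => HnK.
have Hk := k_pos.
have Hw1 := word_pos (_ : 1 < n).
have Hn3 : (3 < n + 2) = true by lia.
have Hn0 : (size w == 0) = false by apply/eqP; lia.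
have Hw0 : (nth 0 w 1 == 0) = false by apply/eqP; lia.
apply: (reach_seq (pc1 := 7) (b1 := 7) (b2 := 63) (Q1 := fun M => [/\ M 1 = 16 * n, M (16 * n) = k &
   forall x, 2 <= x -> x != 16 * n -> M x = init_mem k w x])).
  do 7 st.
  rewrite (_ : n + n + (n + n) + (n + n + (n + n)) + (n + n + (n + n) + (n + n + (n + n))) = 16 * n); last lia.
  apply: reach_done; split.
  - rewrite /=. case: eqP => // E; lia.
  - by rewrite /= eqxx.
  - move=> x Hx Hxn /=. rewrite (negbTE Hxn).
    have -> : (x == 1) = false by apply/eqP; lia.
    by [].
move=> M1 [H11 H1n Hx1].
apply: (reach_seq (pc1 := 55) (b1 := 48) (b2 := 15)); first by apply: (save_block (j := 16)).
move=> M2 [H21 Hx2].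
have HK : M2 (n * 16) = k.
  rewrite Hx2; last lia. rewrite ifF; first by rewrite mulnC.
  apply/negbTE; lia.
do 2 st.
rewrite ?exp24 ?mulKn //.
do 13 st.
have Hinit : forall x, 1 < x < n + 2 -> init_mem k w x = nth 0 w (x - 2).
  move=> x Hx /=. rewrite Hx. have -> : (x == 0) = false by apply/eqP; lia.
  by have -> : (x == 1) = false by apply/eqP; lia.
apply: reach_done; split.
- rewrite /Const /=; split; try lia; split; try lia; split; lia.
- by [].
- move=> j Hj Hjn /=; kill_eq.
  rewrite Hx2; last by apply/eqP; lia.
  have -> : (D <= D + j < D + 16) = true by lia.
  rewrite Hx1; [|lia|apply/eqP; lia].
  rewrite Hinit; last lia. congr nth; lia.
- move=> j Hj /=; kill_eq.
  rewrite Hx2; last by apply/eqP; lia.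
  have -> : (D <= 2 + j < D + 16) = false by apply/negbTE; lia.
  rewrite Hx1; [|lia|apply/eqP; lia].
  rewrite Hinit; last lia. congr nth; lia.
Qed.


Lemma main_big : exists M, run ws Prog (1000 * (k * 2 ^ k + k * n + 1)) 0 (init_mem k w) = Some M /\
  M 0 = (F k w (2 ^ k).-1 < n.+1).
Proof.
have Hk := k_pos.
have HR : reach ws 0 (init_mem k w) 150 (fun M => M 0 = (F k w (2 ^ k).-1 < n.+1))
  (70 + (8 * (n - 16) + 2) + (12 * k + 20) + (1 + (n * (10 * k.+1 + 10) + 1)) +
   (3 + ((2 ^ k - 1) * (25 * k + 10) + 2)) + 4).
  apply: (reach_seq (pc1 := 146) (Q1 := fun M => Const M /\ Dp (2 ^ k) M)); last by move=> M [HC HD]; apply: final_phase.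
  apply: (reach_seq (pc1 := 110) (Q1 := fun M => Const M /\ TabFrom 0 M)); last by move=> M [HC HT]; apply: dp_phase.
  apply: (reach_seq (pc1 := 88) (Q1 := fun M => [/\ Const M, Input M & forall c, c < k.+1 + k.+1 -> M (TBv + n * k.+1 + c) = n])); last by move=> M [HC HI Hr]; apply: tab_phase.
  apply: (reach_seq (pc1 := 78) (Q1 := fun M => Const M /\ Input M)); last by move=> M [HC HI]; apply: rows_phase.
  apply: reach_seq; first exact: prologue.
  move=> M [HC H8 Hd Hs]. apply: (copy_loop (j := 16)) => //.
case: HR => t [M [Ht Hex HM]].
exists M; split => //.
apply: (run_mono (f := t + 1)).
  rewrite (exec_run _ Hex). by apply: run_halt.
apply: leq_trans (_ : _ + 1 <= _).
  by rewrite leq_add2r.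
have E1 : n * (10 * k.+1 + 10) = 10 * (k * n) + 20 * n.
  rewrite mulnDr mulnS mulnDr mulnA (mulnC n 10) -mulnA (mulnC n k). lia.
have E2 : (2 ^ k - 1) * (25 * k + 10) <= 25 * (k * 2 ^ k) + 10 * 2 ^ k.
  apply: leq_trans (_ : 2 ^ k * (25 * k + 10) <= _).
    by rewrite leq_mul2r leq_subr orbT.
  rewrite mulnDr (mulnC (2 ^ k)) -mulnA. lia.
have H1 : n <= k * n by rewrite leq_pmull.
have H2 : 2 ^ k <= k * 2 ^ k by rewrite leq_pmull.
have H3 : k <= k * 2 ^ k by rewrite leq_pmulr // expn_gt0.
move: Ht; rewrite E1. lia.
Qed.

End Machine.

Lemma DF_fits k w : DisjointFactors k w <-> fits k w (2 ^ k).-1 (size w).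
Proof.
split.
- move=> [s [e [H1 H2]]].
  exists (fun i => s i.+1), (fun i => e i.+1); split.
  + move=> i Hi _. apply: H1. lia.
  + move=> i j Hi Hj _ _ Hij. apply: H2; [lia | lia | by rewrite eqSS].
- move=> [s [e [H1 H2]]].
  exists (fun i => s i.-1), (fun i => e i.-1); split.
  + move=> i Hi. have Hi' : i.-1 < k by lia.
    have [? ? ? ?] := H1 _ Hi' (bit_full Hi').
    have E : i.-1.+1 = i by lia.
    by split => //; rewrite -E.
  + move=> i j Hi Hj Hij.
    have Hi' : i.-1 < k by lia.
    have Hj' : j.-1 < k by lia.
    apply: H2 => //; try exact: bit_full.
    apply/eqP => E. move/eqP: Hij; apply; lia.
Qed.

Lemma fits_mono k w S q q' : q <= q' -> fits k w S q -> fits k w S q'.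
Proof.
move=> Hq [s [e [H1 H2]]]; exists s, e; split => // i Hi Hb.
have [? ? ? ?] := H1 i Hi Hb; split => //; lia.
Qed.

Lemma DF_F k w : DisjointFactors k w <-> F k w (2 ^ k).-1 <= size w.
Proof.
have Hlt : (2 ^ k).-1 < 2 ^ k by rewrite prednK ?expn_gt0.
have [Hle Hsnd Hcmp] := F_spec w Hlt.
rewrite DF_fits; split.
- exact: Hcmp.
- move=> H; apply: fits_mono H (Hsnd H).
Qed.

Theorem corollary27 :
  exists (P : seq instr) (C : nat),
    forall (k : nat) (w : seq nat) (ws : nat),
      is_word k w ->
      C * (k * 2 ^ k + k * size w + 1) <= 2 ^ ws ->
      exists M : nat -> nat,
        run ws P (C * (k * 2 ^ k + k * size w + 1)) 0 (init_mem k w) = Some M /\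
        (DisjointFactors k w -> M 0 = 1) /\
        (~ DisjointFactors k w -> M 0 = 0).
Proof.
exists Prog, 1000 => k w ws Hw HW.
have HW2 : 1000 <= 2 ^ ws by lia.
case: (ltnP 1 (size w)) => Hn.
- have [M [HM H0]] := main_big Hw Hn HW.
  exists M; split => //.
  rewrite H0; case: (DF_F k w) => A B; split => H.
  + by rewrite ltnS (A H).
  + have : ~~ (F k w (2 ^ k).-1 <= size w) by apply/negP => /B.
    by rewrite ltnS => /negbTE ->.
- case Ew: w Hn Hw HW => [|a [|b s]] //= _ Hw HW.
  + rewrite (_ : 1000 * (k * 2 ^ k + k * 0 + 1) = (1000 * (k * 2 ^ k + k * 0 + 1) - 3).+3); last lia.
    rewrite /=. eexists; split; first reflexivity.
    rewrite /= !modn_small; try (case: (_ == _) => /=; lia).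
    rewrite /init_mem /=.
    split.
    * move=> [s [e [H1 H2]]]. case: eqP => // E.
      have Hk : 1 <= 1 <= k by apply/andP; split => //; lia.
      have [_ H _ _] := H1 1 Hk. by [].
    * move=> H. case: eqP => // E. exfalso; apply: H.
      by exists (fun _ => 0), (fun _ => 0); split => i; lia.
  + rewrite (_ : 1000 * (k * 2 ^ k + k * 1 + 1) = (1000 * (k * 2 ^ k + k * 1 + 1) - 4).+4); last lia.
    rewrite /=. eexists; split; first reflexivity.
    rewrite /= modn_small; last lia.
    rewrite /init_mem /=.
    split; last by [].
    move=> [s [e [H1 H2]]].
    move: Hw; rewrite /is_word /= andbT => /andP [Ha Hk].
    have Hk1 : 1 <= 1 <= k by apply/andP; split => //; lia.
    have [H3 H4 _ _] := H1 1 Hk1.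
    move: H3 H4 => /=; lia.
Qed.
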